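(* For $k\geq2$, the $4$-valent $(2k,0)$-cluster $\square(2k)$ has eigenvalue $4$ as a $D_4$-invariant eigenvalue with multiplicity at least $\lceil (k-1)/2\rceil$; that is, the space of $D_4$-invariant functions $u$ on $V(\square(2k))$ with $\Delta_{\square(2k)}u=4u$ has dimension at least $\lceil (k-1)/2\rceil$.
   Context: The $4$-valent $(m,0)$-cluster $\square(m)$ is the graph whose vertices are the barycenters of the $m^2$ unit squares of the square lattice contained in the square with vertices $0,m,(1+i)m,im$, adjacent when the squares share an edge (the $m\times m$ grid graph), with Laplacian $(\Delta_{\square(m)}u)(x)=\deg(x)u(x)-\sum_{y\sim x}u(y)$. The dihedral group $D_4$ of symmetries of the square acts on $V(\square(m))$; $u$ is $D_4$-invariant if $u(\sigma x)=u(x)$ for all $\sigma\in D_4$ and all $x$. *)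

(* Defs.v *)
From HB Require Import structures.
From mathcomp Require Import all_boot all_order all_algebra.
Set Implicit Arguments. Unset Strict Implicit. Unset Printing Implicit Defensive.
Import Order.TTheory GRing.Theory Num.Theory.
Local Open Scope ring_scope.

(* Vertices of the m x m square cluster: the unit square [a,a+1] x [b,b+1]
   (0 <= a,b < m) is encoded by (a,b); its barycenter is (a+1/2, b+1/2). *)
Definition sqV (m : nat) : finType := ('I_m * 'I_m)%type.

Definition sq_adj (m : nat) : rel (sqV m) := fun x y =>
  ((x.1 == y.1) && ((x.2.+1 == y.2 :> nat) || (y.2.+1 == x.2 :> nat))) ||
  ((x.2 == y.2) && ((x.1.+1 == y.1 :> nat) || (y.1.+1 == x.1 :> nat))).

Definition sq_deg (m : nat) (x : sqV m) : nat := #|[set y | sq_adj x y]|.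

Definition sqFun (R : realFieldType) (m : nat) := {ffun sqV m -> R^o}.

Definition sq_lap (R : realFieldType) (m : nat) (u : sqFun R m) : sqFun R m :=
  [ffun x => (sq_deg x)%:R * u x - \sum_(y | sq_adj x y) u y].

(* The dihedral group D_4 of symmetries of the square [0,m]^2 acting on
   barycenters; x |-> m - x sends a+1/2 to (m-1-a)+1/2, i.e. rev_ord. *)
Definition D4act (m : nat) (g : 'I_8) (x : sqV m) : sqV m :=
  let: (a, b) := x in
  match val g with
  | 0 => (a, b)
  | 1 => (b, rev_ord a)
  | 2 => (rev_ord a, rev_ord b)
  | 3 => (rev_ord b, a)
  | 4 => (b, a)
  | 5 => (rev_ord b, rev_ord a)
  | 6 => (rev_ord a, b)
  | _ => (a, rev_ord b)
  end.

Definition D4_eigenspace (R : realFieldType) (m : nat) (lam : R)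
  : {vspace sqFun R m} :=
  (lker (linfun (fun u : sqFun R m => sq_lap u - lam *: u)) :&:
   \bigcap_(g : 'I_8)
     lker (linfun (fun u : sqFun R m => [ffun x => u (D4act g x)] - u)))%VS.

(* Main.v *)
Require Import Defs.
From HB Require Import structures.
From mathcomp Require Import all_boot all_order all_algebra zify ring lra.
Set Implicit Arguments. Unset Strict Implicit. Unset Printing Implicit Defensive.
Import Order.TTheory GRing.Theory Num.Theory.
Local Open Scope ring_scope.

Section Lin.
Variables (R : realFieldType) (m : nat).

Lemma sq_lap_lin : linear (@sq_lap R m).
Proof.
move=> a u v; apply/ffunP => x; rewrite !ffunE.
under eq_bigr do rewrite !ffunE.
rewrite big_split /= -scaler_sumr /=.
rewrite /GRing.scale /=. ring.
Qed.

Definition lapf (lam : R) := fun u : sqFun R m => sq_lap u - lam *: u.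
Lemma lapf_lin lam : linear (lapf lam).
Proof.
move=> a u v; rewrite /lapf sq_lap_lin.
by rewrite scalerDr scalerBr scalerA mulrC -scalerA; rewrite addrACA opprD.
Qed.
HB.instance Definition _ lam := GRing.isLinear.Build R (sqFun R m) (sqFun R m) _ (lapf lam) (lapf_lin lam).

Definition d4f (g : 'I_8) := fun u : sqFun R m => [ffun x => u (D4act g x)] - u.
Lemma d4f_lin g : linear (d4f g).
Proof.
move=> a u v; apply/ffunP => x; rewrite /d4f !ffunE.
rewrite /GRing.scale /=. ring.
Qed.
HB.instance Definition _ g := GRing.isLinear.Build R (sqFun R m) (sqFun R m) _ (d4f g) (d4f_lin g).

Lemma memE (lam : R) (u : sqFun R m) :
  sq_lap u = lam *: u -> (forall g x, u (D4act g x) = u x) ->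
  u \in D4_eigenspace m lam.
Proof.
move=> hl hg; rewrite memv_cap; apply/andP; split.
  by rewrite memv_ker (lfunE (lapf lam)); apply/eqP; rewrite /= /lapf hl subrr.
rewrite memvE; apply/subv_bigcapP => g _; rewrite -memvE memv_ker (lfunE (d4f g)).
by rewrite /d4f; apply/eqP/ffunP => x; rewrite !ffunE hg subrr.
Qed.
End Lin.

Section Nb.
Variables (R : realFieldType) (n : nat).

Lemma sum_pt (c d : nat) (G : nat -> nat -> R) :
  \sum_(y : sqV n) (if (y.1 == c :> nat) && (y.2 == d :> nat) then G y.1 y.2 else 0)
  = if (c < n)%N && (d < n)%N then G c d else 0.
Proof.
case: ifP => [/andP[hc hd] | hcd].
  rewrite (bigD1 ((Ordinal hc, Ordinal hd) : sqV n)) //= !eqxx /= big1 ?addr0 //.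
  move=> [i j] /= ne; case: ifP => // /andP[/eqP ei /eqP ej]; case/negP: ne.
  by rewrite xpair_eqE -!val_eqE /= ei ej !eqxx.

apply: big1 => -[i j] /=; case: (i =P c :> nat) => //= ei; case: (j =P d :> nat) => //= ej.
by move: hcd; rewrite -ei -ej !ltn_ord.
Qed.

Lemma adj_split (x y : sqV n) (G : nat -> nat -> R) :
  (if sq_adj x y then G y.1 y.2 else 0) =
    (if (y.1 == x.1.+1 :> nat) && (y.2 == x.2 :> nat) then G y.1 y.2 else 0)
  + (if (0 < x.1)%N then (if (y.1 == x.1.-1 :> nat) && (y.2 == x.2 :> nat) then G y.1 y.2 else 0) else 0)
  + (if (y.1 == x.1 :> nat) && (y.2 == x.2.+1 :> nat) then G y.1 y.2 else 0)
  + (if (0 < x.2)%N then (if (y.1 == x.1 :> nat) && (y.2 == x.2.-1 :> nat) then G y.1 y.2 else 0) else 0).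
Proof.
case: x y => [[a ha] [b hb]] [[c hc] [d hd]]; rewrite /sq_adj /= -!val_eqE /=.
by repeat case: ifP => ?; rewrite ?addr0 ?add0r //; lia.
Qed.

Lemma sum_if (b : bool) (F : sqV n -> R) :
  \sum_y (if b then F y else 0) = if b then \sum_y F y else 0.
Proof. by case: b => //; rewrite big1. Qed.

Lemma sum_adj (x : sqV n) (G : nat -> nat -> R) :
  \sum_(y | sq_adj x y) G y.1 y.2 =
    (if (x.1.+1 < n)%N then G x.1.+1 x.2 else 0)
  + (if (0 < x.1)%N then G x.1.-1 x.2 else 0)
  + (if (x.2.+1 < n)%N then G x.1 x.2.+1 else 0)
  + (if (0 < x.2)%N then G x.1 x.2.-1 else 0).
Proof.
rewrite big_mkcond (eq_bigr _ (fun y _ => adj_split x y G)) !big_split /=.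
rewrite !sum_if !sum_pt !ltn_ord /= ?andbT.
case: x => [[a ha] [b hb]] /=.
have -> : (a.-1 < n)%N by rewrite (leq_ltn_trans (leq_pred a) ha).
by have -> : (b.-1 < n)%N by rewrite (leq_ltn_trans (leq_pred b) hb).
Qed.
End Nb.

Definition ev (t : int) : bool := (2 %| t)%Z.

Lemma mod2 t : ((t %% 2)%Z = 0 \/ (t %% 2)%Z = 1).
Proof.
have h1 := @modz_ge0 t 2 isT; have h2 := @ltz_pmod t 2 isT; lia.
Qed.

Lemma evE t : ev t = ((t %% 2)%Z == 0).
Proof. by rewrite /ev; case: dvdz_mod0P => [->|/eqP/negbTE ->]. Qed.

Lemma evD s t : ev (s + t) = (ev s == ev t).
Proof.
rewrite !evE -modzDm; by case: (mod2 s) => ->; case: (mod2 t) => ->.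
Qed.

Lemma evN t : ev (- t) = ev t.
Proof. by rewrite /ev rpredN. Qed.

Lemma evB s t : ev (s - t) = (ev s == ev t).
Proof. by rewrite evD evN. Qed.

Lemma ev1 : ev 1 = false. Proof. by []. Qed.
Lemma evN1 : ev (-1) = false. Proof. by []. Qed.
Lemma ev0 : ev 0 = true. Proof. by []. Qed.
Lemma ev2 : ev 2 = true. Proof. by []. Qed.
Lemma evM2 x : ev (x * 2) = true. Proof. by rewrite /ev dvdz_mull // dvdzz. Qed.

Section U.
Variables (R : realFieldType) (K c : int).
Hypotheses (hK : ev K) (hc : ev c).

Definition sg (t : int) : R := if ev t then 1 else -1.
Definition F (t : int) : R := (K %| t - c)%Z%:R - (K %| t + 2 + c)%Z%:R.
Definition U (x y : int) : R := sg y * (F (x + y) + F (y - x - 1)).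

Lemma Fe t t' : t = t' -> F t = F t'. Proof. by move->. Qed.

Lemma Fper t : F (t + K) = F t.
Proof.
rewrite /F.
rewrite (_ : t + K - c = (t - c) + K); last by ring.
rewrite (_ : t + K + 2 + c = (t + 2 + c) + K); last by ring.
by rewrite !(rpredDr _ (dvdzz K)).
Qed.

Lemma FperN t : F (t - K) = F t.
Proof. by rewrite -[in RHS](subrK K t) Fper. Qed.

Lemma Fanti t : F (-2 - t) = - F t.
Proof.
rewrite /F.
rewrite (_ : -2 - t - c = - (t + 2 + c)); last by ring.
rewrite (_ : -2 - t + 2 + c = - (t - c)); last by ring.
rewrite !rpredN; ring.
Qed.

Lemma Fodd t : ev t = false -> F t = 0.
Proof.
move=> ht; rewrite /F.
have h2 : (2 %| K)%Z by [].
case: (boolP (K %| t - c)%Z) => [/(dvdz_trans h2)|_].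
  by rewrite -/(ev _) evB ht hc.
case: (boolP (K %| t + 2 + c)%Z) => [/(dvdz_trans h2)|_].
  by rewrite -/(ev _) !evD ht hc.
by rewrite subr0.
Qed.

Lemma sgS y : sg (y + 1) = - sg y.
Proof. by rewrite /sg evD ev1; case: (ev y); rewrite ?opprK. Qed.
Lemma sgP y : sg (y - 1) = - sg y.
Proof. by rewrite /sg evB ev1; case: (ev y); rewrite ?opprK. Qed.

Lemma U_lo_x y : U (-1) y = U 0 y.
Proof.
rewrite /U.
rewrite (@Fe (-1 + y) (y - 0 - 1)); last by ring.
rewrite (@Fe (y - -1 - 1) (0 + y)); last by ring.
by rewrite addrC.
Qed.

Lemma U_hi_x y : U K y = U (K - 1) y.
Proof.
rewrite /U.
rewrite (@Fe (K + y) (y + K)); last by ring.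
rewrite (@Fe (y - K - 1) ((y - 1) - K)); last by ring.
rewrite (@Fe (K - 1 + y) ((y - 1) + K)); last by ring.
rewrite (@Fe (y - (K - 1) - 1) (y - K)); last by ring.
by rewrite Fper FperN Fper FperN addrC.
Qed.

Lemma U_lo_y x : U x (-1) = U x 0.
Proof.
rewrite /U.
rewrite (@Fe (-1 - x - 1) (-2 - x)); last by ring.
rewrite (@Fe (0 - x - 1) (-2 - (x - 1))); last by ring.
rewrite (@Fe (x + 0) x); last by ring.
rewrite !Fanti /sg evN1 ev0; ring.
Qed.

Lemma U_hi_y x : U x K = U x (K - 1).
Proof.
rewrite /U.
rewrite (@Fe (K - x - 1) ((-2 - (x - 1)) + K)); last by ring.
rewrite (@Fe (K - 1 - x - 1) ((-2 - x) + K)); last by ring.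
rewrite (@Fe (x + (K - 1)) ((x - 1) + K)); last by ring.
rewrite !Fper !Fanti /sg evB hK ev1 /=; ring.
Qed.

Lemma U_harm x y : U (x + 1) y + U (x - 1) y + U x (y + 1) + U x (y - 1) = 0.
Proof.
rewrite /U sgS sgP.
rewrite (@Fe (x + 1 + y) (x + y + 1)); last by ring.
rewrite (@Fe (y - (x + 1) - 1) (y - x - 1 - 1)); last by ring.
rewrite (@Fe (x - 1 + y) (x + y - 1)); last by ring.
rewrite (@Fe (y - (x - 1) - 1) (y - x - 1 + 1)); last by ring.
rewrite (@Fe (x + (y + 1)) (x + y + 1)); last by ring.
rewrite (@Fe (y + 1 - x - 1) (y - x - 1 + 1)); last by ring.
rewrite (@Fe (x + (y - 1)) (x + y - 1)); last by ring.
rewrite (@Fe (y - 1 - x - 1) (y - x - 1 - 1)); last by ring.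
ring.
Qed.

Lemma U_T x y : U y x = U x y.
Proof.
rewrite /U (@Fe (x - y - 1) (-2 - (y - x - 1))); last by ring.
rewrite Fanti (addrC y x).
have hd : ev (y - x - 1) = ~~ ev (x + y).
  rewrite (_ : y - x - 1 = (x + y) - (x * 2 + 1)); last by ring.
  by rewrite evB [ev (x * 2 + 1)]evD evM2 ev1; case: (ev (x + y)).
case E: (ev (x + y)).
  rewrite (@Fodd (y - x - 1)); last by rewrite hd E.
  rewrite /sg; move: E; rewrite evD; case: (ev x); case: (ev y) => //= _; ring.
rewrite (@Fodd (x + y)) // /sg; move: E; rewrite evD; case: (ev x); case: (ev y) => //= _; ring.
Qed.

Lemma U_Rx x y : U (K - 1 - x) y = U x y.
Proof.
rewrite /U.
rewrite (@Fe (K - 1 - x + y) ((y - x - 1) + K)); last by ring.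
rewrite (@Fe (y - (K - 1 - x) - 1) ((x + y) - K)); last by ring.
by rewrite Fper FperN addrC.
Qed.

Lemma U_Ry x y : U x (K - 1 - y) = U x y.
Proof.
rewrite /U.
rewrite (@Fe (x + (K - 1 - y)) ((-2 - (y - x - 1)) + K)); last by ring.
rewrite (@Fe (K - 1 - y - x - 1) ((-2 - (x + y)) + K)); last by ring.
rewrite !Fper !Fanti /sg !evB hK ev1 /=; case: (ev y) => /=; ring.
Qed.

End U.

Lemma dir (R : realFieldType) (f : bool) (X V W : R) :
  (f -> W = V) -> (~~ f -> V = X) ->
  (if f then 1 else 0) * X - (if f then W else 0) = X - V.
Proof. by case: f => [->|_ ->] //; rewrite ?mul1r ?mul0r ?subr0 ?sub0r ?subrr. Qed.

Lemma ndvd (d m : nat) : (0 < m < d)%N -> ~~ ((d%:Z) %| (m%:Z))%Z.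
Proof. by move=> h; rewrite dvdzE /=; apply/negP => /dvdn_leq; lia. Qed.

Lemma comb (R : realFieldType) (i1 i2 i3 i4 X W1 W2 W3 W4 V1 V2 V3 V4 : R) :
  i1 * X - W1 = X - V1 -> i2 * X - W2 = X - V2 -> i3 * X - W3 = X - V3 ->
  i4 * X - W4 = X - V4 -> V1 + V2 + V3 + V4 = 0 ->
  (i1 + i2 + i3 + i4) * X - (W1 + W2 + W3 + W4) = 4%:R * X.
Proof.
move=> h1 h2 h3 h4 h.
have -> : (i1 + i2 + i3 + i4) * X - (W1 + W2 + W3 + W4) =
  (i1 * X - W1) + (i2 * X - W2) + (i3 * X - W3) + (i4 * X - W4) by ring.
rewrite h1 h2 h3 h4; lra.
Qed.

Section Main.
Variables (R : realFieldType) (k : nat).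
Let n := (2 * k)%N.
Let K : int := n%:Z.
Lemma hK : ev K. Proof. by rewrite /ev dvdzE /= /n dvdn_mulr. Qed.
Lemma hc j : ev (2 * j)%N%:Z. Proof. by rewrite /ev dvdzE /= dvdn_mulr. Qed.

Definition uvec (j : nat) : sqFun R n :=
  [ffun x : sqV n => U R K (2 * j)%N%:Z (nat_of_ord x.1)%:Z (nat_of_ord x.2)%:Z].

Lemma uvec_eig j : sq_lap (uvec j) = 4%:R *: uvec j.
Proof.
apply/ffunP => -[[a ha] [b hb]]; rewrite !ffunE /=.
set G := fun p q : nat => U R K (2 * j)%N%:Z p%:Z q%:Z.
have -> : \sum_(y | sq_adj (Ordinal ha, Ordinal hb) y) uvec j y
    = \sum_(y | sq_adj (Ordinal ha, Ordinal hb) y) G y.1 y.2.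
  by apply: eq_bigr => y _; rewrite ffunE.
have -> : (sq_deg (Ordinal ha, Ordinal hb))%:R
    = \sum_(y | sq_adj (Ordinal ha, Ordinal hb) y) (fun _ _ => 1 : R) y.1 y.2.
  rewrite /sq_deg -sum1_card natr_sum.
  by apply: eq_bigl => y; rewrite inE.
rewrite (sum_adj _ (fun _ _ => (1 : R))) !sum_adj /=.
have Kc := hK; have cc := hc j.
have e1 := @dir R (a.+1 < n)%N (G a b) (U R K (2 * j)%N%:Z (a%:Z + 1) b%:Z) (G a.+1 b).
have e2 := @dir R (0 < a)%N (G a b) (U R K (2 * j)%N%:Z (a%:Z - 1) b%:Z) (G a.-1 b).
have e3 := @dir R (b.+1 < n)%N (G a b) (U R K (2 * j)%N%:Z a%:Z (b%:Z + 1)) (G a b.+1).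
have e4 := @dir R (0 < b)%N (G a b) (U R K (2 * j)%N%:Z a%:Z (b%:Z - 1)) (G a b.-1).
have h := U_harm R K (2 * j)%N%:Z a%:Z b%:Z.
apply: (comb _ _ _ _ h).
- apply: e1 => [_|hn].
    by rewrite /G (_ : (a.+1)%:Z = a%:Z + 1) //; lia.
  have ea : a%:Z = K - 1 by rewrite /K /n; lia.
  by rewrite /G ea (_ : K - 1 + 1 = K) ?U_hi_x //; ring.
- apply: e2 => [h0|hn].
    by rewrite /G (_ : (a.-1)%:Z = a%:Z - 1) //; lia.
  have ea : a = 0%N by lia.
  by rewrite /G ea sub0r U_lo_x.
- apply: e3 => [_|hn].
    by rewrite /G (_ : (b.+1)%:Z = b%:Z + 1) //; lia.
  have eb : b%:Z = K - 1 by rewrite /K /n; lia.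
  by rewrite /G eb (_ : K - 1 + 1 = K) ?U_hi_y //; ring.
- apply: e4 => [h0|hn].
    by rewrite /G (_ : (b.-1)%:Z = b%:Z - 1) //; lia.
  have eb : b = 0%N by lia.
  by rewrite /G eb sub0r U_lo_y.
Qed.


Lemma rv (i : 'I_n) : (nat_of_ord (rev_ord i))%:Z = K - 1 - (nat_of_ord i)%:Z.
Proof. case: i => i hi /=; rewrite /K; lia. Qed.

Lemma uvec_D4 j g x : uvec j (D4act g x) = uvec j x.
Proof.
have Kc := hK; have cc := hc j.
case: x => a b; rewrite !ffunE.
case: g => [[|[|[|[|[|[|[|[|g]]]]]]]] hg] /=; rewrite ?rv //.
- by rewrite U_Ry // U_T.
- by rewrite U_Rx U_Ry.
- by rewrite U_Rx U_T.
- by rewrite U_T.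
- by rewrite U_Rx U_Ry // U_T.
- by rewrite U_Rx.
- by rewrite U_Ry.
Qed.

Lemma uvec_mem j : uvec j \in D4_eigenspace n (4%:R : R).
Proof. by apply: memE; [exact: uvec_eig | exact: uvec_D4]. Qed.

Lemma uvec_pt (i j : nat) (hi : (i < k./2)%N) (hj : (j < k./2)%N) (hjn : (j < n)%N) :
  uvec i (Ordinal hjn, Ordinal hjn) = if i == j then sg R j%:Z else 0.
Proof.
have Kc := hK; have cc := hc i.
have hk2 := odd_double_half k; rewrite -muln2 in hk2.
rewrite ffunE /= /U (@Fodd R K _ Kc cc (j%:Z - j%:Z - 1)); last by rewrite subrr sub0r.
rewrite /F addr0.
rewrite (_ : j%:Z + j%:Z + 2 + (2 * i)%N%:Z = (j + j + 2 + 2 * i)%N%:Z); last by lia.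
rewrite (negbTE (ndvd _)); last by rewrite /n; lia.
rewrite subr0; case: (ltngtP i j) => hij.
{ rewrite (_ : j%:Z + j%:Z - (2 * i)%N%:Z = (j + j - 2 * i)%N%:Z); last by lia.
  rewrite (negbTE (ndvd _)); last by rewrite /n; lia.
  by rewrite mulr0. }
{ rewrite (_ : j%:Z + j%:Z - (2 * i)%N%:Z = - (2 * i - (j + j))%N%:Z); last by lia.
  rewrite rpredN (negbTE (ndvd _)); last by rewrite /n; lia.
  by rewrite mulr0. }
rewrite hij (_ : j%:Z + j%:Z - (2 * j)%N%:Z = 0); last by lia.
by rewrite dvdz0 mulr1.
Qed.

End Main.

Theorem lemma5p2 (R : realFieldType) (k : nat) (hk : (2 <= k)%N) :
  (uphalf (k - 1) <= \dim (D4_eigenspace (2 * k) (4%:R : R)))%N.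
Proof.
rewrite (_ : uphalf (k - 1) = k./2); last by rewrite uphalfE subn1 prednK // ltnW.
set m := k./2.
have hk2 := odd_double_half k; rewrite -muln2 in hk2.
pose X := [tuple uvec R k (nat_of_ord i) | i < m].
have fX : free X.
  apply/freeP => kap hkap i.
  have hin : (i < 2 * k)%N by have := ltn_ord i; rewrite /m; lia.
  have := congr1 (fun f : sqFun R (2 * k) => f (Ordinal hin, Ordinal hin)) hkap.
  rewrite /= sum_ffunE ffunE.
  rewrite (eq_bigr (fun i' : 'I_m => kap i' * (if (i' == i) then sg R (nat_of_ord i)%:Z else 0))); last first.
    move=> i' _; rewrite ffunE nth_mktuple.
    by rewrite (@uvec_pt R k _ _ (ltn_ord i') (ltn_ord i)).
  rewrite (bigD1 i) //= big1 ?addr0; last first.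
    by move=> i' /negbTE ->; rewrite mulr0.
  rewrite eqxx => /eqP; rewrite mulf_eq0 => /orP[/eqP //|].
  by rewrite /sg; case: ifP; rewrite ?oppr_eq0 oner_eq0.
have sX : (<<X>> <= D4_eigenspace (2 * k) (4%:R : R))%VS.
  by apply/span_subvP => v /mapP [i _ ->]; exact: uvec_mem.
by have := dimvS sX; move: fX; rewrite /free size_tuple => /eqP ->.
Qed.
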